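(* The group of isometries of $K$ that preserve its tessellation by equilateral triangles is isomorphic to $\mathbb Z/2\mathbb Z\times\mathfrak S_3$.
   Context: Tessellate $\mathbb R^2$ by unit equilateral triangles with vertex set the lattice generated by $(1,0)$ and $(1/2,\sqrt3/2)$. Let $T=\mathbb R^2/\langle (0,\sqrt3),(3,0)\rangle$ with the induced tessellation, and let $K=T/\langle i\rangle$, where $i$ is the fixed-point-free orientation-reversing involution induced by $(x,y)\mapsto(x+3/2,\ \sqrt3/2-y)$. Then $K$ is a flat Klein bottle tessellated by six equilateral triangles of side $1$ (it is the Klein bottle appearing as the cusp cross-section $K\times[0,1]$ of the building block obtained by gluing six ideal hyperbolic rectified $5$-cells). *)

(* Defs.v *)
From Stdlib Require Import Relation_Operators.
From HB Require Import structures.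
From mathcomp Require Import all_boot all_order all_algebra all_fingroup.
From mathcomp Require Import boolp classical_sets reals.
Set Implicit Arguments. Unset Strict Implicit. Unset Printing Implicit Defensive.
Import Order.TTheory GRing.Theory Num.Theory.
Local Open Scope ring_scope.
Local Open Scope classical_set_scope.

Definition pt (R : realType) := (R * R)%type.

Definition sqrt3 (R : realType) : R := Num.sqrt 3.

Definition t1 (R : realType) (p : pt R) : pt R := (p.1, p.2 + sqrt3 R).
Definition t2 (R : realType) (p : pt R) : pt R := (p.1 + 3, p.2).
Definition ginv (R : realType) (p : pt R) : pt R :=
  (p.1 + 3 / 2, sqrt3 R / 2 - p.2).

Definition gen_step (R : realType) (p q : pt R) : Prop :=
  q = t1 p \/ q = t2 p \/ q = ginv p.

Definition Kequiv (R : realType) : pt R -> pt R -> Prop :=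
  clos_refl_sym_trans (pt R) (@gen_step R).

Definition Kclass (R : realType) (p : pt R) : set (pt R) := [set q | Kequiv p q].

(* The Klein bottle K = R^2 / Gamma, points are equivalence classes. *)
Definition Kpt (R : realType) := {S : set (pt R) | exists p, S = Kclass p}.

Definition proj (R : realType) (p : pt R) : Kpt R :=
  exist _ (Kclass p) (ex_intro _ p erefl).

Definition dist2 (R : realType) (p q : pt R) : R :=
  Num.sqrt ((p.1 - q.1) ^+ 2 + (p.2 - q.2) ^+ 2).

Definition distK (R : realType) (a b : Kpt R) : R :=
  inf [set d | exists p q, sval a p /\ sval b q /\ d = dist2 p q].

Definition isometryK (R : realType) (F : Kpt R -> Kpt R) : Prop :=
  bijective F /\ forall a b, distK (F a) (F b) = distK a b.

(* Closed triangles of the tessellation of R^2 by unit equilateral triangles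
   with vertex lattice generated by e1 = (1,0), e2 = (1/2, sqrt3/2). *)
Definition lat (R : realType) (a b : int) : pt R :=
  (a%:~R + b%:~R / 2, b%:~R * sqrt3 R / 2).

Definition up_tri (R : realType) (a b : int) : set (pt R) :=
  [set p | exists s t : R, 0 <= s /\ 0 <= t /\ s + t <= 1 /\
     p = ((@lat R a b).1 + s + t / 2, (@lat R a b).2 + t * sqrt3 R / 2)].

Definition down_tri (R : realType) (a b : int) : set (pt R) :=
  [set p | exists s t : R, 0 <= s /\ 0 <= t /\ s + t <= 1 /\
     p = ((@lat R a b).1 + 3 / 2 - s - t / 2,
          (@lat R a b).2 + sqrt3 R / 2 - t * sqrt3 R / 2)].

Definition tileR2 (R : realType) (D : set (pt R)) : Prop :=
  exists a b : int, D = @up_tri R a b \/ D = @down_tri R a b.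

Definition tileK (R : realType) (X : set (Kpt R)) : Prop :=
  exists D, tileR2 D /\ X = (@proj R) @` D.

Definition tess_isometry (R : realType) (F : Kpt R -> Kpt R) : Prop :=
  isometryK F /\ forall X, tileK X -> tileK (F @` X).

(* Main.v *)
Require Import Defs.
From Stdlib Require Import Relation_Operators.
From HB Require Import structures.
From mathcomp Require Import all_boot all_order all_algebra all_fingroup.
From mathcomp Require Import boolp classical_sets reals.
From mathcomp Require Import ring lra zify.
Set Implicit Arguments. Unset Strict Implicit. Unset Printing Implicit Defensive.
Import Order.TTheory GRing.Theory Num.Theory.
Local Open Scope ring_scope.
Local Open Scope classical_set_scope.

Ltac fld := field; rewrite ?pnatr_eq0 //.
Ltac pc := rewrite ?(intrD, intrB, intrN, intrM).

Section K.
Variable R : realType.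
Local Notation s := (sqrt3 R).
Local Notation pt := (pt R).
Implicit Types p q r : pt.

Lemma s_gt0 : 0 < s.
Proof. by rewrite /sqrt3 sqrtr_gt0 ltr0n. Qed.
Lemma s_neq0 : s != 0.
Proof. by rewrite gt_eqF // s_gt0. Qed.
Lemma s2 : s * s = 3.
Proof. by rewrite -expr2 /sqrt3 sqr_sqrtr // ler0n. Qed.

Definition L (u v : R) : pt := (u + v / 2, v * s / 2).
Definition lu (p : pt) : R := p.1 - p.2 / s.
Definition lv (p : pt) : R := 2 * p.2 / s.

Lemma LK p : L (lu p) (lv p) = p.
Proof.
case: p => x y; rewrite /L /lu /lv /=; have := s_neq0 => hs.
congr pair; field; done.
Qed.

Lemma L_inj u v u' v' : L u v = L u' v' -> u = u' /\ v = v'.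
Proof.
case=> h1 h2; have hs := s_gt0.
have hv : v = v'.
  have : (v - v') * s = 0 by lra.
  by move/eqP; rewrite mulf_eq0 (gt_eqF hs) orbF subr_eq0 => /eqP.
by subst v'; split => //; lra.
Qed.

Definition Q (x y : R) := x * x + x * y + y * y.

Lemma dist2L u v u' v' : dist2 (L u v) (L u' v') = Num.sqrt (Q (u - u') (v - v')).
Proof.
rewrite /dist2 /L /Q /=; congr Num.sqrt.
have h := s2. rewrite !expr2.
have -> : (v * s / 2 - v' * s / 2) * (v * s / 2 - v' * s / 2) = (v - v') * (v - v') * (s * s) / 4 by field; rewrite ?pnatr_eq0.
rewrite h; field.
all: by rewrite ?pnatr_eq0.
Qed.

(* normal forms of Gamma *)
Definition nf (e : bool) (a b : int) (p : pt) : pt :=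
  if e then (p.1 + 3 / 2 + 3 * b%:~R, s / 2 - p.2 + a%:~R * s)
  else (p.1 + 3 * b%:~R, p.2 + a%:~R * s).

Lemma nfLf a b u v : nf false a b (L u v) = L (u + 3 * b%:~R - a%:~R) (v + 2 * a%:~R).
Proof. rewrite /nf /L /=; congr pair; fld. Qed.
Lemma nfLt a b u v : nf true a b (L u v) = L (u + v + 1 + 3 * b%:~R - a%:~R) (1 - v + 2 * a%:~R).
Proof. rewrite /nf /L /=; congr pair; fld. Qed.

Definition Orb (p q : pt) := exists e a b, q = nf e a b p.

Lemma Orb_refl p : Orb p p.
Proof. exists false, 0, 0; rewrite /nf /=; case: p => x y /=; congr pair; rewrite ?mulr0z ?mulr0 ?mul0r; lra. Qed.

Lemma Orb_sym p q : Orb p q -> Orb q p.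
Proof.
case=> [[] [a [b ->]]].
- exists true, a, (- b - 1); rewrite /nf /=; case: p => x y /=.
  rewrite ?intrD ?intrN; congr pair; fld.
- exists false, (- a), (- b); rewrite /nf /=; case: p => x y /=.
  pc; congr pair; fld.
Qed.

Lemma Orb_trans p q r : Orb p q -> Orb q r -> Orb p r.
Proof.
case=> [e1 [a1 [b1 ->]]] [e2 [a2 [b2 ->]]].
case: p => x y; case: e1; case: e2; rewrite /nf /=.
- exists false, (a2 - a1), (b1 + b2 + 1); rewrite /= ?intrD ?intrB; congr pair; fld.
- exists true, (a1 + a2), (b1 + b2); rewrite /= !intrD; congr pair; fld.
- exists true, (a2 - a1), (b1 + b2); rewrite /= ?intrD ?intrB; congr pair; fld.
- exists false, (a1 + a2), (b1 + b2); rewrite /= !intrD; congr pair; fld.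
Qed.

Lemma Kequiv_Orb p q : Kequiv p q -> Orb p q.
Proof.
elim=> {p q} [p q st | p | p q _ IH | p q r _ IH1 _ IH2].
- case: st => [->|[->|->]].
  + exists false, 1, 0; rewrite /nf /t1; congr pair; rewrite ?mulr0z ?mulr1z ?mulr0 ?mul1r; lra.
  + exists false, 0, 1; rewrite /nf /t2; congr pair; rewrite ?mulr0z ?mulr1z ?mulr1 ?mul0r; lra.
  + exists true, 0, 0; rewrite /nf /ginv; congr pair; rewrite ?mulr0z ?mulr0 ?mul0r; lra.
- exact: Orb_refl.
- exact: Orb_sym.
- exact: Orb_trans IH2.
Qed.

Definition tr (x y : R) (p : pt) : pt := (p.1 + x, p.2 + y).

Lemma Kequiv_tr_int (x y : R) : (forall p, Kequiv p (tr x y p)) ->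
  forall (n : int) p, Kequiv p (tr (n%:~R * x) (n%:~R * y) p).
Proof.
move=> H.
have Hn : forall (n : nat) p, Kequiv p (tr (n%:R * x) (n%:R * y) p).
  elim=> [|n IH] p.
  - have -> : tr (0%:R * x) (0%:R * y) p = p by case: p => a b; rewrite /tr /= !mul0r !addr0.
    exact: rst_refl.
  - apply: rst_trans (IH p) _.
    have -> : tr (n.+1%:R * x) (n.+1%:R * y) p = tr x y (tr (n%:R * x) (n%:R * y) p).
      case: p => a b; rewrite /tr /= -addn1 !natrD !mulrDl !mul1r; congr pair; fld.
    exact: H.
case=> n p.
- by rewrite /= (_ : (Posz n)%:~R = n%:R :> R) //; apply: Hn.
- have E : forall p, p = tr (n.+1%:R * x) (n.+1%:R * y) (tr ((Negz n)%:~R * x) ((Negz n)%:~R * y) p).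
    by case=> a b; rewrite /tr /= NegzE mulrNz /=; congr pair; fld.
  have := Hn n.+1 (tr ((Negz n)%:~R * x) ((Negz n)%:~R * y) p); rewrite -(E p).
  exact: rst_sym.
Qed.

Lemma Kequiv_nf e a b p : Kequiv p (nf e a b p).
Proof.
have H1 : forall p, Kequiv p (tr 0 s p).
  move=> q; apply: rst_step; left; rewrite /t1 /tr; case: q => ? ? /=; congr pair; lra.
have H2 : forall p, Kequiv p (tr 3 0 p).
  move=> q; apply: rst_step; right; left; rewrite /t2 /tr; case: q => ? ? /=; congr pair; lra.
have Hf : forall p, Kequiv p (nf false a b p).
  move=> q; apply: rst_trans (Kequiv_tr_int H1 a q) _.
  have -> : nf false a b q = tr (b%:~R * 3) (b%:~R * 0) (tr (a%:~R * 0) (a%:~R * s) q).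
    case: q => ? ?; rewrite /nf /tr /=; congr pair; fld.
  exact: Kequiv_tr_int.
case: e; last exact: Hf.
apply: rst_trans (_ : Kequiv p (ginv p)) _.
  by apply: rst_step; right; right.
have -> : nf true a b p = nf false a b (ginv p).
  case: p => ? ?; rewrite /nf /ginv /=; congr pair; fld.
exact: Hf.
Qed.

Lemma KequivE p q : Kequiv p q <-> Orb p q.
Proof.
split; first exact: Kequiv_Orb.
by case=> [e [a [b ->]]]; apply: Kequiv_nf.
Qed.

Lemma Kequiv_sym p q : Kequiv p q -> Kequiv q p.
Proof. exact: rst_sym. Qed.
Lemma Kequiv_trans p q r : Kequiv p q -> Kequiv q r -> Kequiv p r.
Proof. exact: rst_trans. Qed.

Lemma projP p q : proj p = proj q <-> Kequiv p q.
Proof.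
split.
- move=> /(congr1 sval) /=; rewrite /Kclass => E.
  have : [set r | @Kequiv R q r] q by exact: rst_refl.
  by rewrite -E.
- move=> H; apply: eq_sig_hprop => /=.
    by move=> ? ? ?; apply: Prop_irrelevance.
  rewrite /Kclass; apply/seteqP; split => r /=.
  + by move=> h; apply: Kequiv_trans (Kequiv_sym H) h.
  + by move=> h; apply: Kequiv_trans H h.
Qed.

Lemma proj_surj (z : Kpt R) : exists p, z = proj p.
Proof.
case: z => S [p E]; exists p; apply: eq_sig_hprop => //=.
Qed.

Lemma dist2_nf e a b (x y : pt) : dist2 (nf e a b x) (nf e a b y) = dist2 x y.
Proof.
rewrite /dist2 /nf; case: e => /=; congr Num.sqrt; ring.
Qed.

Lemma dist2_ge0 (x y : pt) : 0 <= dist2 x y.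
Proof. exact: sqrtr_ge0. Qed.

Lemma distK_min p q m :
  (forall q', Kequiv q q' -> m <= dist2 p q') ->
  (exists2 q0, Kequiv q q0 & dist2 p q0 = m) ->
  distK (proj p) (proj q) = m.
Proof.
move=> Hlb [q0 Hq0 Hm].
rewrite /distK /=.
set S := (X in inf X).
have lbS : lbound S m.
  move=> d [p' [q' [/= Hp [Hq ->]]]].
  have /KequivE [e [a [b Ep]]] := Kequiv_sym Hp.
  rewrite -(dist2_nf e a b) -Ep; apply: Hlb.
  apply: Kequiv_trans Hq _; exact: Kequiv_nf.
have mS : S m.
  by exists p, q0; split; [exact: rst_refl | split].
apply/eqP; rewrite eq_le; apply/andP; split.
- by apply: ge_inf => //; exists m.
- by apply: lb_le_inf => //; exists m.
Qed.


Definition mem_up (a b : int) (u v : R) :=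
  a%:~R <= u /\ b%:~R <= v /\ u + v <= a%:~R + b%:~R + 1.
Definition mem_down (a b : int) (u v : R) :=
  u <= a%:~R + 1 /\ v <= b%:~R + 1 /\ a%:~R + b%:~R + 1 <= u + v.

Lemma upP a b u v : up_tri a b (L u v) <-> mem_up a b u v.
Proof.
rewrite /up_tri /mem_up /lat /=; split.
- case=> x [y [hx [hy [hxy E]]]].
  have : L u v = L (a%:~R + x) (b%:~R + y) by rewrite E /L; congr pair; fld.
  by case/L_inj => -> ->; lra.
- case=> h1 [h2 h3]; exists (u - a%:~R), (v - b%:~R); do 3! (split; first lra).
  rewrite /L; congr pair; fld.
Qed.

Lemma downtP a b u v : down_tri a b (L u v) <-> mem_down a b u v.
Proof.
rewrite /down_tri /mem_down /lat /=; split.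
- case=> x [y [hx [hy [hxy E]]]].
  have : L u v = L (a%:~R + 1 - x) (b%:~R + 1 - y) by rewrite E /L; congr pair; fld.
  by case/L_inj => -> ->; lra.
- case=> h1 [h2 h3]; exists (a%:~R + 1 - u), (b%:~R + 1 - v); do 3! (split; first lra).
  rewrite /L; congr pair; fld.
Qed.

Definition P6 (U V : int) : pt := L (U%:~R / 6) (V%:~R / 6).

Definition kt (U V U' V' : int) : bool :=
  ((12 %| V' - V)%Z && (36 %| 2*(U' - U) + (V' - V))%Z) ||
  ((12 %| V' + V - 6)%Z && (36 %| 2*(U' - U) - V + V' - 18)%Z).

Lemma int_of_real (x y : int) : (x%:~R : R) = y%:~R -> x = y.
Proof. by move/eqP; rewrite eqr_int => /eqP. Qed.

Lemma ktP U V U' V' : proj (P6 U V) = proj (P6 U' V') <-> kt U V U' V'.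
Proof.
rewrite projP KequivE /kt; split.
- case=> [[] [a [b]]]; rewrite /P6 ?nfLf ?nfLt => /L_inj [h1 h2].
  + have e1 : U' = U + V + 6 + 18 * b - 6 * a.
      apply: int_of_real; pc; lra.
    have e2 : V' = 6 - V + 12 * a.
      apply: int_of_real; pc; lra.
    apply/orP; right; apply/andP; split; apply/dvdzP.
    * by exists a; lia.
    * by exists b; lia.
  + have e1 : U' = U + 18 * b - 6 * a.
      apply: int_of_real; pc; lra.
    have e2 : V' = V + 12 * a.
      apply: int_of_real; pc; lra.
    apply/orP; left; apply/andP; split; apply/dvdzP.
    * by exists a; lia.
    * by exists b; lia.
- case/orP => /andP [/dvdzP [a ha] /dvdzP [b hb]].
  + exists false, a, b; rewrite /P6 nfLf; congr L.
    * have -> : U' = U + 18 * b - 6 * a by lia.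
      pc; lra.
    * have -> : V' = V + 12 * a by lia.
      pc; lra.
  + exists true, a, b; rewrite /P6 nfLt; congr L.
    * have -> : U' = U + V + 6 + 18 * b - 6 * a by lia.
      pc; lra.
    * have -> : V' = 6 - V + 12 * a by lia.
      pc; lra.
Qed.


Lemma Q1 (x y : int) : (x <> 0 \/ y <> 0) -> 1 <= x * x + x * y + y * y.
Proof.
move=> H. have E: 4 * (x*x + x*y + y*y) = (2*x+y)*(2*x+y) + 3 * (y*y) by ring.
have: (0 < x \/ x < 0) \/ (0 < y \/ y < 0) by lia.
case=> [[]|[]] h; nia.
Qed.

Lemma Q_ge0 x y : 0 <= Q x y.
Proof. rewrite /Q; nra. Qed.

Lemma QintE (x y : int) : Q x%:~R y%:~R = (x * x + x * y + y * y)%:~R.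
Proof. by rewrite /Q; pc. Qed.

Lemma Qint_ge1 (x y : int) : (x <> 0 \/ y <> 0) -> 1 <= Q x%:~R y%:~R.
Proof. by move=> H; rewrite QintE (_ : 1 = 1%:~R) // ler_int Q1. Qed.

Lemma Qmin (sg ta X1 X2 : R) (d1 d2 e1 e2 f1 f2 : int) :
  0 <= sg -> 0 <= ta -> sg + ta <= 1 ->
  Q e1%:~R e2%:~R = 1 -> Q f1%:~R f2%:~R = 1 ->
  (d1 - e1 <> 0 \/ d2 - e2 <> 0) -> (d1 - f1 <> 0 \/ d2 - f2 <> 0) ->
  X1 = sg * e1%:~R + ta * f1%:~R -> X2 = sg * e2%:~R + ta * f2%:~R ->
  Q X1 X2 <= Q (X1 - d1%:~R) (X2 - d2%:~R).
Proof.
move=> hs ht hst he hf hde hdf -> ->.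
have q1 := Qint_ge1 hde; have q2 := Qint_ge1 hdf.
move: q1 q2; rewrite !intrB => q1 q2.
have q0 := Q_ge0 d1%:~R d2%:~R.
set D := Q d1%:~R d2%:~R in q0.
rewrite -subr_ge0.
have -> : Q (sg * e1%:~R + ta * f1%:~R - d1%:~R) (sg * e2%:~R + ta * f2%:~R - d2%:~R) -
  Q (sg * e1%:~R + ta * f1%:~R) (sg * e2%:~R + ta * f2%:~R) =
  (1 - sg - ta) * D + sg * (Q (d1%:~R - e1%:~R) (d2%:~R - e2%:~R) - Q e1%:~R e2%:~R)
   + ta * (Q (d1%:~R - f1%:~R) (d2%:~R - f2%:~R) - Q f1%:~R f2%:~R).
  by rewrite /D /Q; ring.
rewrite he hf; apply: addr_ge0; [apply: addr_ge0|]; apply: mulr_ge0; lra.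
Qed.

Lemma orbit_lattice (m n : int) q : Kequiv (L m%:~R n%:~R) q ->
  exists m' n' : int, q = L m'%:~R n'%:~R /\ (3 %| (m' - n') - (m - n))%Z.
Proof.
case/KequivE => [[] [a [b ->]]].
- exists (m + n + 1 + 3 * b - a), (1 - n + 2 * a); split.
  + by rewrite nfLt; congr L; pc.
  + by apply/dvdzP; exists (n + b - a); lia.
- exists (m + 3 * b - a), (n + 2 * a); split.
  + by rewrite nfLf; congr L; pc.
  + by apply/dvdzP; exists (b - a); lia.
Qed.

Definition cornerO (a b : int) (d : nat) : int * int :=
  match d with 0%N => (a, b) | 1%N => (a + 1, b) | _ => (a, b + 1) end.

Lemma corner_step (c1 c2 m' n' e1 e2 f1 f2 : int) (u v sg ta : R) :
  0 <= sg -> 0 <= ta -> sg + ta <= 1 ->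
  Q e1%:~R e2%:~R = 1 -> Q f1%:~R f2%:~R = 1 ->
  (3 %| (m' - n') - (c1 - c2))%Z -> ~~ (3 %| e1 - e2)%Z -> ~~ (3 %| f1 - f2)%Z ->
  u - c1%:~R = sg * e1%:~R + ta * f1%:~R -> v - c2%:~R = sg * e2%:~R + ta * f2%:~R ->
  Q (u - c1%:~R) (v - c2%:~R) <= Q (u - m'%:~R) (v - n'%:~R).
Proof.
move=> hs ht hst he hf hd he3 hf3 E1 E2.
have -> : u - m'%:~R = (u - c1%:~R) - (m' - c1)%:~R by pc; lra.
have -> : v - n'%:~R = (v - c2%:~R) - (n' - c2)%:~R by pc; lra.
apply: (Qmin hs ht hst he hf _ _ E1 E2).
- case: (boolP ((m' - c1 - e1) == 0)) => [/eqP h1|/eqP h1]; last by left.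
  case: (boolP ((n' - c2 - e2) == 0)) => [/eqP h2|/eqP h2]; last by right.
  exfalso; move/negP: he3; apply; case/dvdzP: hd => k hk; apply/dvdzP; exists k; lia.
- case: (boolP ((m' - c1 - f1) == 0)) => [/eqP h1|/eqP h1]; last by left.
  case: (boolP ((n' - c2 - f2) == 0)) => [/eqP h2|/eqP h2]; last by right.
  exfalso; move/negP: hf3; apply; case/dvdzP: hd => k hk; apply/dvdzP; exists k; lia.
Qed.

Lemma dist_corner (a b : int) (d : nat) (u v : R) : mem_up a b u v -> (d < 3)%N ->
  distK (proj (L u v)) (proj (L (cornerO a b d).1%:~R (cornerO a b d).2%:~R)) =
  Num.sqrt (Q (u - (cornerO a b d).1%:~R) (v - (cornerO a b d).2%:~R)).
Proof.
move=> [h1 [h2 h3]]; case: d => [|[|[|//]]] _ /=;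
(apply: distK_min; last by eexists; [exact: rst_refl | rewrite dist2L]);
move=> q' /orbit_lattice [m' [n' [-> hdiv]]]; rewrite dist2L ler_sqrt; try exact: Q_ge0.
- apply: (@corner_step _ _ _ _ 1 0 0 1 u v (u - a%:~R) (v - b%:~R)) => //;
    rewrite /Q ?mulr1z ?mulr0z; lra.
- apply: (@corner_step _ _ _ _ (-1) 0 (-1) 1 u v (a%:~R + 1 - u - v + b%:~R) (v - b%:~R)) => //;
    rewrite /Q ?mulrN1z ?mulr1z ?mulr0z; pc; lra.
- apply: (@corner_step _ _ _ _ 0 (-1) 1 (-1) u v (a%:~R + b%:~R + 1 - u - v) (u - a%:~R)) => //;
    rewrite /Q ?mulrN1z ?mulr1z ?mulr0z; pc; lra.
Qed.


Lemma trilat (x y x' y' : R) :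
  Q x y = Q x' y' -> Q (x - 1) y = Q (x' - 1) y' -> Q x (y - 1) = Q x' (y' - 1) ->
  x = x' /\ y = y'.
Proof. rewrite /Q => h1 h2 h3; split; nra. Qed.

Lemma mid0 (x y : R) : Q (x - 1) y = 1/4 -> Q x (y - 1) = 1/4 -> x = 1/2 /\ y = 1/2.
Proof.
rewrite /Q => h1 h2.
have hxy : x = y by nra.
subst y. have : (x - 1/2) ^+ 2 = 0 by rewrite expr2; nra.
move/eqP; rewrite sqrf_eq0 subr_eq0 => /eqP ->; done.
Qed.

Lemma mid1 (x y : R) : Q x y = 1/4 -> Q x (y - 1) = 1/4 -> x = 0 /\ y = 1/2.
Proof.
rewrite /Q => h1 h2.
have hxy : x = 1 - 2 * y by nra.
subst x. have : (y - 1/2) ^+ 2 = 0 by rewrite expr2; nra.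
move/eqP; rewrite sqrf_eq0 subr_eq0 => /eqP ->; split => //; lra.
Qed.

Lemma mid2 (x y : R) : Q x y = 1/4 -> Q (x - 1) y = 1/4 -> x = 1/2 /\ y = 0.
Proof.
rewrite /Q => h1 h2.
have hxy : y = 1 - 2 * x by nra.
subst y. have : (x - 1/2) ^+ 2 = 0 by rewrite expr2; nra.
move/eqP; rewrite sqrf_eq0 subr_eq0 => /eqP ->; split => //; lra.
Qed.


Lemma img_eq (D D' : set pt) (f g : pt -> pt) :
  (forall p, D p -> D' (f p)) -> (forall p, D' p -> D (g p)) ->
  (forall p, Kequiv p (f p)) -> (forall p, Kequiv p (g p)) ->
  (@proj R) @` D = (@proj R) @` D'.
Proof.
move=> hf hg kf kg; apply/seteqP; split => z [p hp <-].
- by exists (f p); [apply: hf | apply/projP/Kequiv_sym].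
- by exists (g p); [apply: hg | apply/projP/Kequiv_sym].
Qed.

Lemma upP' a b p : up_tri a b p <-> mem_up a b (lu p) (lv p).
Proof. by rewrite -{1}(LK p) upP. Qed.
Lemma downtP' a b p : down_tri a b p <-> mem_down a b (lu p) (lv p).
Proof. by rewrite -{1}(LK p) downtP. Qed.

Lemma up_shift a b al be :
  (@proj R) @` up_tri a b = (@proj R) @` up_tri (a + 3 * be - al) (b + 2 * al).
Proof.
apply: (img_eq (f := nf false al be) (g := nf false (- al) (- be))).
- move=> p; rewrite -(LK p) nfLf !upP /mem_up; pc; lra.
- move=> p; rewrite -(LK p) nfLf !upP /mem_up; pc; lra.
- by move=> p; apply: Kequiv_nf.
- by move=> p; apply: Kequiv_nf.
Qed.

Lemma down_shift a b :
  (@proj R) @` down_tri a b = (@proj R) @` up_tri (a + b + 2) (- b).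
Proof.
apply: (img_eq (f := nf true 0 0) (g := nf true 0 (-1))).
- move=> p; rewrite -(LK p) nfLt downtP upP /mem_up /mem_down; pc; lra.
- move=> p; rewrite -(LK p) nfLt downtP upP /mem_up /mem_down; pc; lra.
- by move=> p; apply: Kequiv_nf.
- by move=> p; apply: Kequiv_nf.
Qed.

Definition ta (i : nat) : int := (i %% 3)%N.
Definition tb (i : nat) : int := (i %/ 3)%N.
Definition X (i : nat) : set (Kpt R) := (@proj R) @` up_tri (ta i) (tb i).
Definition tidx (a b : int) : nat := (absz ((a + (b %/ 2)%Z) %% 3)%Z + 3 * absz (b %% 2)%Z)%N.
Definition dtidx (a b : int) : nat := tidx (a + b + 2) (- b).

Lemma tidx_lt a b : (tidx a b < 6)%N.
Proof. rewrite /tidx; lia. Qed.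

Lemma up_tidx a b : (@proj R) @` up_tri a b = X (tidx a b).
Proof.
rewrite (up_shift a b (- (b %/ 2)%Z) (- ((a + (b %/ 2)%Z) %/ 3)%Z)) /X /ta /tidx /tb.
congr (_ @` up_tri _ _); lia.
Qed.

Lemma down_tidx a b : (@proj R) @` down_tri a b = X (dtidx a b).
Proof. by rewrite down_shift up_tidx. Qed.

Lemma coverK p : exists2 i, (i < 6)%N & X i (proj p).
Proof.
set u := lu p; set v := lv p.
set a := Num.floor u; set b := Num.floor v.
have ha := floor_le u; have ha' := floorD1_gt u.
have hb := floor_le v; have hb' := floorD1_gt v.
move: ha' hb'; rewrite !intrD => ha' hb'.
case: (lerP (u + v) (a%:~R + b%:~R + 1)) => h.
- exists (tidx a b); first exact: tidx_lt.
  by rewrite -up_tidx; exists p => //; apply/upP'; rewrite /mem_up -/u -/v; lra.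
- exists (dtidx a b); first exact: tidx_lt.
  by rewrite -down_tidx; exists p => //; apply/downtP'; rewrite /mem_down -/u -/v; lra.
Qed.


Lemma ler_intP (x y : int) : (x%:~R : R) <= y%:~R -> x <= y.
Proof. by rewrite ler_int. Qed.

Lemma inter03 p q : up_tri 0 0 p -> up_tri 0 1 q -> Kequiv p q ->
  p = L 0 0 \/ p = L 1 0 \/ p = L 0 1.
Proof.
rewrite -(LK p); set u := lu p; set v := lv p.
move=> /upP [h1 [h2 h3]] hq /KequivE [[] [al [be Eq]]]; move: hq; rewrite Eq.
- rewrite nfLt upP /mem_up => [[k1 [k2 k3]]].
  move: h1 h2 h3; rewrite ?mulr0z => h1 h2 h3.
  set c := - 3 * be - al; set d := 2 * al.
  have hc : u <= c%:~R by rewrite /c; pc; lra.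
  have hd : v <= d%:~R by rewrite /d; pc; lra.
  have hcd : (c + d - 1)%:~R <= u + v by rewrite /c /d; pc; lra.
  have ic : 0 <= c by apply: ler_intP; lra.
  have id : 0 <= d by apply: ler_intP; lra.
  have icd : c + d <= 2 by apply: ler_intP; move: hcd; pc; lra.
  have : (d = 0 /\ (c = 0 \/ c = 2)) \/ (d = 2 /\ c = 0) by rewrite /c /d in ic id icd *; lia.
  case=> [[hd0 [hc0|hc0]]|[hd0 hc0]]; move: hc hd hcd; rewrite hd0 hc0 ?intrD ?intrB => hc hd hcd.
  + by left; congr L; lra.
  + by right; left; congr L; lra.
  + by right; right; congr L; lra.
- rewrite nfLf upP /mem_up => [[k1 [k2 k3]]].
  move: h1 h2 h3; rewrite ?mulr0z => h1 h2 h3.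
  set c := al - 3 * be; set d := 1 - 2 * al.
  have hc : c%:~R <= u by rewrite /c; pc; lra.
  have hd : d%:~R <= v by rewrite /d; pc; lra.
  have hcd : u + v <= (c + d + 1)%:~R by rewrite /c /d; pc; lra.
  case: (lerP 1 c) => ic.
  + have : (1 : R) <= c%:~R by rewrite (_ : 1 = 1%:~R) // ler_int.
    by move=> ?; right; left; congr L; lra.
  case: (lerP 1 d) => id.
  + have : (1 : R) <= d%:~R by rewrite (_ : 1 = 1%:~R) // ler_int.
    by move=> ?; right; right; congr L; lra.
  have : c + d + 1 <= 0 by rewrite /c /d in ic id *; lia.
  rewrite -(ler_int R) => h; move: hcd; rewrite intrD => hcd.
  by left; congr L; lra.
Qed.


Definition c0 (i : nat) : nat := absz ((ta i - tb i) %% 3)%Z.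
Definition dd (i k : nat) : nat := ((k + 6 - c0 i) %% 3)%N.
Definition kcl (i d : nat) : nat := ((d + c0 i) %% 3)%N.
Definition cornerI (i k : nat) : int * int := cornerO (ta i) (tb i) (dd i k).
Definition cornerP (i k : nat) : pt := L (cornerI i k).1%:~R (cornerI i k).2%:~R.
Definition midU (i k : nat) : int * int :=
  let a := ta i in let b := tb i in
  match dd i k with
  | 0%N => (6*a+3, 6*b+3) | 1%N => (6*a, 6*b+3) | _ => (6*a+3, 6*b) end.
Definition midP (i k : nat) : pt := P6 (midU i k).1 (midU i k).2.
Definition V (k : nat) : Kpt R := proj (P6 (6 * k%:Z) 0).
Definition nbt (i k : nat) : nat :=
  match k, i with
  | 0, 0 => 2 | 0, 2 => 0 | 0, 1 => 5 | 0, 5 => 1 | 0, 3 => 4 | 0, _ => 3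
  | 1, 0 => 1 | 1, 1 => 0 | 1, 2 => 3 | 1, 3 => 2 | 1, 4 => 5 | 1, _ => 4
  | _, 0 => 4 | _, 4 => 0 | _, 1 => 2 | _, 2 => 1 | _, 3 => 5 | _, _ => 3 end%N.
Definition I6 := iota 0 6.
Definition I3 := iota 0 3.

Lemma inI6 i : (i < 6)%N -> i \in I6.
Proof. by rewrite mem_iota. Qed.
Lemma inI3 i : (i < 3)%N -> i \in I3.
Proof. by rewrite mem_iota. Qed.

Lemma LP6 (m n : int) : L m%:~R n%:~R = P6 (6 * m) (6 * n).
Proof. by rewrite /P6; congr L; pc; fld. Qed.

Lemma C_F1 : all (fun i => all (fun k =>
  kt (6 * (cornerI i k).1) (6 * (cornerI i k).2) (6 * k%:Z) 0) I3) I6.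
Proof. by []. Qed.

Lemma C_F2 : all (fun i => all (fun k =>
  kt (midU i k).1 (midU i k).2 (midU (nbt i k) k).1 (midU (nbt i k) k).2) I3) I6.
Proof. by []. Qed.

Lemma C_F3 : all (fun i => all (fun j => all (fun k =>
  kt (midU i k).1 (midU i k).2 (midU j k).1 (midU j k).2 ==> (j == i) || (j == nbt i k)) I3) I6) I6.
Proof. by []. Qed.

Lemma C_F4 : all (fun k => all (fun k' => kt (6 * k%:Z) 0 (6 * k'%:Z) 0 ==> (k == k')) I3) I3.
Proof. by []. Qed.

Lemma C_F5 : all (fun i => all (fun k => (nbt i k < 6)%N && (nbt i k != i)) I3) I6.
Proof. by []. Qed.

Lemma C_dd : all (fun i => all (fun k => (dd i k < 3)%N && (kcl i (dd i k) == k)) I3) I6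
  && all (fun i => all (fun d => (kcl i d < 3)%N && (dd i (kcl i d) == d)) I3) I6.
Proof. by []. Qed.


End K.

Section K2.
Variable R : realType.
Local Notation s := (sqrt3 R).
Local Notation pt := (pt R).
Implicit Types p q r : pt.
Local Notation X := (@X R).
Local Notation V := (@V R).
Local Notation P6 := (@P6 R).
Local Notation cornerP := (@cornerP R).
Local Notation midP := (@midP R).

Lemma all2P (P : nat -> nat -> bool) (s1 s2 : seq nat) :
  all (fun i => all (fun k => P i k) s2) s1 -> forall i k, i \in s1 -> k \in s2 -> P i k.
Proof. by move=> /allP H i k hi hk; have /allP := H i hi; apply. Qed.

Lemma dd_lt i k : (i < 6)%N -> (k < 3)%N -> (dd i k < 3)%N.
Proof.
move=> hi hk; have /andP [H _] := C_dd.
by have /andP [] := all2P H (inI6 hi) (inI3 hk).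
Qed.
Lemma kcl_dd i k : (i < 6)%N -> (k < 3)%N -> kcl i (dd i k) = k.
Proof.
move=> hi hk; have /andP [H _] := C_dd.
by have /andP [_ /eqP] := all2P H (inI6 hi) (inI3 hk).
Qed.
Lemma kcl_lt i d : (i < 6)%N -> (d < 3)%N -> (kcl i d < 3)%N.
Proof.
move=> hi hk; have /andP [_ H] := C_dd.
by have /andP [] := all2P H (inI6 hi) (inI3 hk).
Qed.
Lemma dd_kcl i d : (i < 6)%N -> (d < 3)%N -> dd i (kcl i d) = d.
Proof.
move=> hi hk; have /andP [_ H] := C_dd.
by have /andP [_ /eqP] := all2P H (inI6 hi) (inI3 hk).
Qed.

Lemma corner_up i k : (i < 6)%N -> (k < 3)%N -> up_tri (ta i) (tb i) (cornerP i k).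
Proof.
move=> hi hk; rewrite /cornerP /cornerI upP /mem_up.
by case: (dd i k) (dd_lt hi hk) => [|[|[|//]]] _ /=; pc; lra.
Qed.

Lemma corner_V i k : (i < 6)%N -> (k < 3)%N -> proj (cornerP i k) = V k.
Proof.
move=> hi hk; rewrite /cornerP LP6 /V; apply/ktP.
exact: (all2P C_F1 (inI6 hi) (inI3 hk)).
Qed.

Lemma VIn i k : (i < 6)%N -> (k < 3)%N -> X i (V k).
Proof. by move=> hi hk; rewrite -(corner_V hi hk); exists (cornerP i k) => //; apply: corner_up. Qed.

Lemma VDist i k p : (i < 6)%N -> (k < 3)%N -> up_tri (ta i) (tb i) p ->
  distK (proj p) (V k) = dist2 p (cornerP i k).
Proof.
move=> hi hk /upP' hp; rewrite -(corner_V hi hk) /cornerP /cornerI -{1 2}(LK p) dist2L.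
exact: dist_corner (dd_lt hi hk).
Qed.

Lemma sqrt_inj (x y : R) : 0 <= x -> 0 <= y -> Num.sqrt x = Num.sqrt y -> x = y.
Proof. by move=> hx hy E; rewrite -(sqr_sqrtr hx) -(sqr_sqrtr hy) E. Qed.

Lemma trilat2 (x y x' y' a b : R) :
  Q (x - a) (y - b) = Q (x' - a) (y' - b) -> Q (x - (a + 1)) (y - b) = Q (x' - (a + 1)) (y' - b) ->
  Q (x - a) (y - (b + 1)) = Q (x' - a) (y' - (b + 1)) -> x = x' /\ y = y'.
Proof. rewrite /Q => h1 h2 h3; split; nra. Qed.

Lemma TriChar i (z1 z2 : Kpt R) : (i < 6)%N -> X i z1 -> X i z2 ->
  (forall k, (k < 3)%N -> distK z1 (V k) = distK z2 (V k)) -> z1 = z2.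
Proof.
move=> hi [p1 h1 <-] [p2 h2 <-] H.
have E : forall d, (d < 3)%N -> Q (lu p1 - (cornerO (ta i) (tb i) d).1%:~R) (lv p1 - (cornerO (ta i) (tb i) d).2%:~R)
    = Q (lu p2 - (cornerO (ta i) (tb i) d).1%:~R) (lv p2 - (cornerO (ta i) (tb i) d).2%:~R).
  move=> d hd; have hk := kcl_lt hi hd.
  have := H _ hk; rewrite (VDist hi hk h1) (VDist hi hk h2) /cornerP /cornerI dd_kcl //.
  by rewrite -{1}(LK p1) -{1}(LK p2) !dist2L; apply: sqrt_inj; apply: Q_ge0.
have e0 := E 0%N erefl; have e1 := E 1%N erefl; have e2 := E 2%N erefl.
move: e0 e1 e2 => /=; rewrite !intrD !mulr1z.
move=> e0 e1 e2; have [] := trilat2 e0 e1 e2 => E1 E2.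
congr proj; rewrite -(LK p1) -(LK p2); congr L; lra.
Qed.


Lemma luL (u v : R) : lu (L u v) = u.
Proof. by have [] := L_inj (LK (L u v)). Qed.
Lemma lvL (u v : R) : lv (L u v) = v.
Proof. by have [] := L_inj (LK (L u v)). Qed.

Lemma MidIn i k : (i < 6)%N -> (k < 3)%N -> up_tri (ta i) (tb i) (midP i k).
Proof.
move=> hi hk; rewrite /midP /midU /P6 upP /mem_up.
by case: (dd i k) (dd_lt hi hk) => [|[|[|//]]] _ /=; pc; lra.
Qed.

Lemma dd_inj i k k' : (i < 6)%N -> (k < 3)%N -> (k' < 3)%N -> dd i k = dd i k' -> k = k'.
Proof. by move=> hi hk hk' E; rewrite -(kcl_dd hi hk) -(kcl_dd hi hk') E. Qed.

Lemma sqrt_half (x : R) : x = (1/2) ^+ 2 -> Num.sqrt x = 1/2.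
Proof. by move=> ->; rewrite sqrtr_sqr ger0_norm //; lra. Qed.

Lemma MidDist i k k' : (i < 6)%N -> (k < 3)%N -> (k' < 3)%N -> k' <> k ->
  distK (proj (midP i k)) (V k') = 1/2.
Proof.
move=> hi hk hk' hne; rewrite (VDist hi hk' (MidIn hi hk)).
have hd : dd i k' <> dd i k by move/(dd_inj hi hk' hk).
rewrite /midP /midU /cornerP /cornerI /P6 dist2L.
move: hd (dd_lt hi hk) (dd_lt hi hk'); case: (dd i k) => [|[|[|//]]]; case: (dd i k') => [|[|[|//]]] //= _ _ _;
  apply: sqrt_half; rewrite /Q; pc; fld.
Qed.

Lemma sqrt_eq_half (x : R) : 0 <= x -> Num.sqrt x = 1/2 -> x = 1/4.
Proof. by move=> hx E; rewrite -(sqr_sqrtr hx) E; fld. Qed.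

Lemma mid0' (x y a b : R) : Q (x - (a + 1)) (y - b) = 1/4 -> Q (x - a) (y - (b + 1)) = 1/4 ->
  x = a + 1/2 /\ y = b + 1/2.
Proof.
move=> e1 e2.
have h1 : Q ((x - a) - 1) (y - b) = 1/4 by rewrite -e1; congr Q; ring.
have h2 : Q (x - a) ((y - b) - 1) = 1/4 by rewrite -e2; congr Q; ring.
by have [] := mid0 h1 h2 => ? ?; split; lra.
Qed.

Lemma mid1' (x y a b : R) : Q (x - a) (y - b) = 1/4 -> Q (x - a) (y - (b + 1)) = 1/4 ->
  x = a /\ y = b + 1/2.
Proof.
move=> e1 e2.
have h2 : Q (x - a) ((y - b) - 1) = 1/4 by rewrite -e2; congr Q; ring.
by have [] := mid1 e1 h2 => ? ?; split; lra.
Qed.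

Lemma mid2' (x y a b : R) : Q (x - a) (y - b) = 1/4 -> Q (x - (a + 1)) (y - b) = 1/4 ->
  x = a + 1/2 /\ y = b.
Proof.
move=> e1 e2.
have h2 : Q ((x - a) - 1) (y - b) = 1/4 by rewrite -e2; congr Q; ring.
by have [] := mid2 e1 h2 => ? ?; split; lra.
Qed.

Lemma MidChar i k (z : Kpt R) : (i < 6)%N -> (k < 3)%N -> X i z ->
  (forall k', (k' < 3)%N -> k' <> k -> distK z (V k') = 1/2) -> z = proj (midP i k).
Proof.
move=> hi hk [p hp <-] H.
have E : forall d, (d < 3)%N -> d != dd i k ->
    Q (lu p - (cornerO (ta i) (tb i) d).1%:~R) (lv p - (cornerO (ta i) (tb i) d).2%:~R) = 1/4.
  move=> d hd /eqP hne; have hk' := kcl_lt hi hd.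
  have hne' : kcl i d <> k by move=> E; apply: hne; rewrite -E dd_kcl.
  have := H _ hk' hne'; rewrite (VDist hi hk' hp) /cornerP /cornerI dd_kcl //.
  by rewrite -{1}(LK p) dist2L; apply: sqrt_eq_half; apply: Q_ge0.
congr proj; rewrite -(LK p) /midP /midU /P6.
move: E (dd_lt hi hk); case: (dd i k) => [|[|[|//]]] E _ /=.
- have := E 1%N erefl erefl; have := E 2%N erefl erefl; rewrite /= !intrD !mulr1z => e2 e1.
  by have [-> ->] := mid0' e1 e2; congr L; pc; fld.
- have := E 0%N erefl erefl; have := E 2%N erefl erefl; rewrite /= !intrD !mulr1z => e2 e1.
  by have [-> ->] := mid1' e1 e2; congr L; pc; fld.
- have := E 0%N erefl erefl; have := E 1%N erefl erefl; rewrite /= !intrD !mulr1z => e2 e1.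
  by have [-> ->] := mid2' e1 e2; congr L; pc; fld.
Qed.

Lemma MidNb i k : (i < 6)%N -> (k < 3)%N -> proj (midP i k) = proj (midP (nbt i k) k).
Proof. by move=> hi hk; apply/ktP; exact: (all2P C_F2 (inI6 hi) (inI3 hk)). Qed.

Lemma MidEq i j k : (i < 6)%N -> (j < 6)%N -> (k < 3)%N ->
  proj (midP i k) = proj (midP j k) -> j = i \/ j = nbt i k.
Proof.
move=> hi hj hk /ktP H.
have /allP H1 := C_F3; have /allP H2 := H1 i (inI6 hi).
have /allP H3 := H2 j (inI6 hj); have := H3 k (inI3 hk); rewrite H /=.
by case/orP => /eqP ->; [left|right].
Qed.

Lemma nb_lt i k : (i < 6)%N -> (k < 3)%N -> (nbt i k < 6)%N.
Proof. by move=> hi hk; have /andP [] := all2P C_F5 (inI6 hi) (inI3 hk). Qed.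
Lemma nb_neq i k : (i < 6)%N -> (k < 3)%N -> nbt i k <> i.
Proof. by move=> hi hk; have /andP [_ /eqP] := all2P C_F5 (inI6 hi) (inI3 hk). Qed.

Lemma VDistinct k k' : (k < 3)%N -> (k' < 3)%N -> V k = V k' -> k = k'.
Proof. by move=> hk hk' /ktP H; have := all2P C_F4 (inI3 hk) (inI3 hk'); rewrite H => /eqP. Qed.

Lemma VChar z : X 0 z -> X 3 z -> exists2 k, (k < 3)%N & z = V k.
Proof.
move=> [p hp <-] [q hq] /projP /Kequiv_sym H.
have [E|[E|E]] := inter03 hp hq H; subst p.
- exists 0%N => //; rewrite /V (_ : L 0 0 = P6 0 0); first by apply/ktP.
  by rewrite /P6; congr L; rewrite mulr0z; lra.
- exists 1%N => //; rewrite /V (_ : L 1 0 = P6 6 0); first by apply/ktP.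
  by rewrite /P6; congr L; rewrite ?mulr0z; lra.
- exists 2%N => //; rewrite /V (_ : L 0 1 = P6 0 6); first by apply/ktP.
  by rewrite /P6; congr L; rewrite ?mulr0z; lra.
Qed.

Lemma XDistinct i j : (i < 6)%N -> (j < 6)%N -> X i = X j -> i = j.
Proof.
move=> hi hj E.
have H : forall k, (k < 3)%N -> j = i \/ j = nbt i k.
  move=> k hk; apply: (MidEq hi hj hk).
  have : X j (proj (midP i k)) by rewrite -E; exists (midP i k) => //; apply: MidIn.
  move=> hz; apply: (MidChar hj hk hz) => k' hk' hne; exact: MidDist.
have [|] := H 0%N erefl => // h0; have [|] := H 1%N erefl => // h1.
have hh : nbt i 0 = nbt i 1 by rewrite -h0 -h1.
clear -hh hi; by move: hh hi; case: i => [|[|[|[|[|[|]]]]]].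
Qed.

End K2.

Section K3.
Variable R : realType.
Local Notation pt := (pt R).
Implicit Types p q r : pt.
Local Notation X := (@X R).
Local Notation V := (@V R).
Local Notation P6 := (@P6 R).
Local Notation cornerP := (@cornerP R).
Local Notation midP := (@midP R).
Local Notation Kpt := (Kpt R).

Lemma tileX i : tileK (X i).
Proof. by exists (up_tri (ta i) (tb i)); split => //; exists (ta i), (tb i); left. Qed.

Lemma tileK_X (Y : set Kpt) : tileK Y -> exists2 j, (j < 6)%N & Y = X j.
Proof.
case=> D [[a [b [->|->]]] ->].
- by exists (tidx a b); [exact: tidx_lt | exact: up_tidx].
- by exists (dtidx a b); [exact: tidx_lt | exact: down_tidx].
Qed.

Lemma img_inj (F : Kpt -> Kpt) (A B : set Kpt) : bijective F -> F @` A = F @` B -> A = B.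
Proof.
case=> g Fg gF E; apply/seteqP; split => z hz.
- have : (F @` B) (F z) by rewrite -E; exists z.
  by case=> w hw /(congr1 g); rewrite !Fg => <-.
- have : (F @` A) (F z) by rewrite E; exists z.
  by case=> w hw /(congr1 g); rewrite !Fg => <-.
Qed.

Lemma inj_surj (n : nat) (f : nat -> nat) : (forall i, (i < n)%N -> (f i < n)%N) ->
  (forall i j, (i < n)%N -> (j < n)%N -> f i = f j -> i = j) ->
  forall j, (j < n)%N -> exists2 i, (i < n)%N & f i = j.
Proof.
move=> hf hinj j hj.
have U : uniq (map f (iota 0 n)).
  rewrite map_inj_in_uniq ?iota_uniq // => x y; rewrite !mem_iota /= !add0n => hx hy.
  exact: hinj.
have S : {subset map f (iota 0 n) <= iota 0 n}.
  by move=> x /mapP [y]; rewrite !mem_iota /= !add0n => hy ->; apply: hf.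
have hs : (size (iota 0 n) <= size (map f (iota 0 n)))%N by rewrite size_map.
have [_ E] := uniq_min_size U S hs.
have : j \in map f (iota 0 n) by rewrite E mem_iota.
by case/mapP => i; rewrite mem_iota /= add0n => hi ->; exists i.
Qed.

Section Tess.
Variable F : Kpt -> Kpt.
Hypothesis HF : tess_isometry F.

Lemma F_bij : bijective F. Proof. by case: HF => [[]]. Qed.
Lemma F_dist a b : distK (F a) (F b) = distK a b. Proof. by case: HF => [[]]. Qed.
Lemma F_inj : injective F. Proof. exact: bij_inj F_bij. Qed.

Lemma sigma_ex : exists sg : nat -> nat, forall i, (i < 6)%N -> (sg i < 6)%N /\ F @` X i = X (sg i).
Proof.
have H : forall i, exists j, (i < 6)%N -> (j < 6)%N /\ F @` X i = X j.
  move=> i; case: HF => _ /(_ _ (tileX i)) /tileK_X [j hj E]; by exists j.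
have [sg Hsg] := choice H; by exists sg.
Qed.

Variable sg : nat -> nat.
Hypothesis Hsg : forall i, (i < 6)%N -> (sg i < 6)%N /\ F @` X i = X (sg i).

Lemma sg_lt i : (i < 6)%N -> (sg i < 6)%N. Proof. by move/Hsg => []. Qed.
Lemma sg_X i : (i < 6)%N -> F @` X i = X (sg i). Proof. by move/Hsg => []. Qed.

Lemma sg_inj i j : (i < 6)%N -> (j < 6)%N -> sg i = sg j -> i = j.
Proof.
move=> hi hj E; apply: (XDistinct hi hj); apply: (img_inj F_bij).
by rewrite !sg_X // E.
Qed.

Lemma sg_surj j : (j < 6)%N -> exists2 i, (i < 6)%N & sg i = j.
Proof. by apply: inj_surj; [exact: sg_lt | exact: sg_inj]. Qed.

Lemma FV k : (k < 3)%N -> exists2 k', (k' < 3)%N & F (V k) = V k'.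
Proof.
move=> hk; have [i0 h0 e0] := sg_surj (erefl : (0 < 6)%N).
have [i3 h3 e3] := sg_surj (erefl : (3 < 6)%N).
apply: VChar.
- by rewrite -e0 -sg_X //; exists (V k) => //; apply: VIn.
- by rewrite -e3 -sg_X //; exists (V k) => //; apply: VIn.
Qed.

Lemma pi_ex : exists pi : nat -> nat, forall k, (k < 3)%N -> (pi k < 3)%N /\ F (V k) = V (pi k).
Proof.
have H : forall k, exists k', (k < 3)%N -> (k' < 3)%N /\ F (V k) = V k'.
  move=> k; case: (ltnP k 3) => hk; last by exists 0%N => h; exfalso; lia.
  by have [k' h1 h2] := FV hk; exists k'.
have [pi Hpi] := choice H; by exists pi.
Qed.

Variable pi : nat -> nat.
Hypothesis Hpi : forall k, (k < 3)%N -> (pi k < 3)%N /\ F (V k) = V (pi k).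

Lemma pi_lt k : (k < 3)%N -> (pi k < 3)%N. Proof. by move/Hpi => []. Qed.
Lemma pi_V k : (k < 3)%N -> F (V k) = V (pi k). Proof. by move/Hpi => []. Qed.

Lemma pi_inj k k' : (k < 3)%N -> (k' < 3)%N -> pi k = pi k' -> k = k'.
Proof.
move=> hk hk' E; apply: (VDistinct hk hk'); apply: F_inj.
by rewrite !pi_V // E.
Qed.

Lemma pi_surj k : (k < 3)%N -> exists2 k', (k' < 3)%N & pi k' = k.
Proof. by apply: inj_surj; [exact: pi_lt | exact: pi_inj]. Qed.

Lemma Fmid i k : (i < 6)%N -> (k < 3)%N -> F (proj (midP i k)) = proj (midP (sg i) (pi k)).
Proof.
move=> hi hk; apply: MidChar; [exact: sg_lt | exact: pi_lt | |].
- by rewrite -sg_X //; exists (proj (midP i k)) => //; exists (midP i k) => //; apply: MidIn.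
- move=> k' hk' hne; have [k'' h'' Ek] := pi_surj hk'; subst k'.
  rewrite -pi_V // F_dist; apply: MidDist => // E; apply: hne; by rewrite E.
Qed.

Lemma constr i k : (i < 6)%N -> (k < 3)%N -> sg (nbt i k) = nbt (sg i) (pi k).
Proof.
move=> hi hk; have hn := nb_lt hi hk.
have E : proj (midP (sg i) (pi k)) = proj (midP (sg (nbt i k)) (pi k)).
  by rewrite -!Fmid // -MidNb.
have [|//] := MidEq (sg_lt hi) (sg_lt hn) (pi_lt hk) E.
by move/(sg_inj hn hi)/(nb_neq hi hk).
Qed.


End Tess.

Lemma U2 (F1 F2 : Kpt -> Kpt) (sg pi : nat -> nat) : tess_isometry F1 -> tess_isometry F2 ->
  (forall i, (i < 6)%N -> (sg i < 6)%N /\ F1 @` X i = X (sg i)) ->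
  (forall i, (i < 6)%N -> (sg i < 6)%N /\ F2 @` X i = X (sg i)) ->
  (forall k, (k < 3)%N -> (pi k < 3)%N /\ F1 (V k) = V (pi k)) ->
  (forall k, (k < 3)%N -> (pi k < 3)%N /\ F2 (V k) = V (pi k)) ->
  F1 = F2.
Proof.
move=> T1 T2 S1 S2 P1 P2; apply: funext => z.
have [p ->] := proj_surj z.
have [i hi hX] := coverK p.
apply: (TriChar (i := sg i)); first exact: (sg_lt S1).
- by rewrite -(sg_X S1) //; exists (proj p).
- by rewrite -(sg_X S2) //; exists (proj p).
- move=> k hk; have [k' hk' <-] := pi_surj T1 P1 hk.
  by rewrite -{1}(pi_V P1) // -(pi_V P2) // !F_dist.
Qed.

End K3.

Definition Tt (neg : bool) (c a : nat) : nat :=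
  if neg then dtidx (c%:Z + a%:Z - 1) (a%:Z - 1) else tidx (c%:Z + a%:Z) a%:Z.
Definition negf (w0 w1 : nat) : bool := ~~ (w1 == (w0 + 1) %% 3)%N.
Definition build (p0 p1 p2 s0 : nat) (i : nat) : nat :=
  match i with 0 => s0 | 1 => nbt s0 p1 | 2 => nbt s0 p0 | 3 => nbt (nbt s0 p0) p1
  | 4 => nbt s0 p2 | _ => nbt (nbt s0 p1) p0 end%N.
Definition pk (p0 p1 p2 k : nat) : nat := match k with 0 => p0 | 1 => p1 | _ => p2 end%N.
Definition consb (p0 p1 p2 s0 : nat) : bool :=
  all (fun i => all (fun k => build p0 p1 p2 s0 (nbt i k) == nbt (build p0 p1 p2 s0 i) (pk p0 p1 p2 k)) I3) I6.

Lemma C_comb : all (fun p0 => all (fun p1 => all (fun p2 => all (fun s0 =>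
  (uniq [:: p0; p1; p2] && consb p0 p1 p2 s0) ==>
  ((s0 == Tt (negf p0 p1) p0 0) || (s0 == Tt (negf p0 p1) p0 1))) I6) I3) I3) I3.
Proof. by []. Qed.

Lemma C_T : all (fun p0 => all (fun p1 =>
  (Tt (negf p0 p1) p0 0 < 6)%N && (Tt (negf p0 p1) p0 1 < 6)%N &&
  (Tt (negf p0 p1) p0 0 != Tt (negf p0 p1) p0 1)) I3) I3.
Proof. by []. Qed.

Section Comb.
Variables (sg pi : nat -> nat).
Hypothesis sg_lt : forall i, (i < 6)%N -> (sg i < 6)%N.
Hypothesis pi_lt : forall k, (k < 3)%N -> (pi k < 3)%N.
Hypothesis pi_inj : forall k k', (k < 3)%N -> (k' < 3)%N -> pi k = pi k' -> k = k'.
Hypothesis constr : forall i k, (i < 6)%N -> (k < 3)%N -> sg (nbt i k) = nbt (sg i) (pi k).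

Lemma sg_build i : (i < 6)%N -> sg i = build (pi 0) (pi 1) (pi 2) (sg 0) i.
Proof.
case: i => [|[|[|[|[|[|//]]]]]] _ /=.
- by [].
- by rewrite -(@constr 0 1 erefl erefl).
- by rewrite -(@constr 0 0 erefl erefl).
- by rewrite -(@constr 0 0 erefl erefl) -(@constr 2 1 erefl erefl).
- by rewrite -(@constr 0 2 erefl erefl).
- by rewrite -(@constr 0 1 erefl erefl) -(@constr 1 0 erefl erefl).
Qed.

Lemma pk_pi k : (k < 3)%N -> pk (pi 0) (pi 1) (pi 2) k = pi k.
Proof. by case: k => [|[|[|//]]]. Qed.

Lemma sg0_T : sg 0 = Tt (negf (pi 0) (pi 1)) (pi 0) 0 \/ sg 0 = Tt (negf (pi 0) (pi 1)) (pi 0) 1.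
Proof.
have hc : consb (pi 0) (pi 1) (pi 2) (sg 0).
  apply/allP => i hi; have {hi} hi : (i < 6)%N by move: hi; rewrite mem_iota.
  apply/allP => k hk; have {hk} hk : (k < 3)%N by move: hk; rewrite mem_iota.
  have hn : (nbt i k < 6)%N by have /andP [] := all2P C_F5 (inI6 hi) (inI3 hk).
  by rewrite -sg_build // -sg_build // pk_pi // constr.
have hu : uniq [:: pi 0; pi 1; pi 2].
  rewrite /= !inE !andbT; apply/andP; split; [apply/norP; split|];
  apply/eqP => /pi_inj; by move=> /(_ erefl erefl).
have /allP H0 := C_comb; have /allP H1 := H0 (pi 0) (inI3 (@pi_lt 0 erefl)).
have /allP H2 := H1 (pi 1) (inI3 (@pi_lt 1 erefl)).
have /allP H3 := H2 (pi 2) (inI3 (@pi_lt 2 erefl)).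
have := H3 (sg 0) (inI6 (@sg_lt 0 erefl)); rewrite hu hc /=.
by case/orP => /eqP; [left|right].
Qed.

End Comb.

Section E.
Variable R : realType.
Local Notation pt := (pt R).
Implicit Types p q r : pt.
Local Notation X := (@X R).
Local Notation V := (@V R).
Local Notation P6 := (@P6 R).
Local Notation Kpt := (Kpt R).

Definition fmapL (neg : bool) (j n : int) (p : pt) : pt :=
  if neg then L (j%:~R - lu p) (n%:~R - lv p) else L (lu p + j%:~R) (lv p + n%:~R).

Lemma fmapL_L neg j n (u v : R) :
  fmapL neg j n (L u v) = if neg then L (j%:~R - u) (n%:~R - v) else L (u + j%:~R) (v + n%:~R).
Proof. by rewrite /fmapL luL lvL. Qed.

Lemma fmap_nf neg j n e al be p : exists e' al' be',
  fmapL neg j n (nf e al be p) = nf e' al' be' (fmapL neg j n p).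
Proof.
rewrite -(LK p); case: neg; case: e; rewrite ?nfLf ?nfLt !fmapL_L.
- exists true, (n - al - 1), (- be - 1); rewrite nfLt; congr L; pc; lra.
- exists false, (- al), (- be); rewrite nfLf; congr L; pc; lra.
- exists true, (al + n), be; rewrite nfLt; congr L; pc; lra.
- exists false, al, be; rewrite nfLf; congr L; pc; lra.
Qed.

Lemma fmap_K neg j n p q : Kequiv p q -> Kequiv (fmapL neg j n p) (fmapL neg j n q).
Proof.
move/KequivE => [e [a [b ->]]]; have [e' [a' [b' ->]]] := fmap_nf neg j n e a b p.
exact: Kequiv_nf.
Qed.

Lemma fmap_dist neg j n p q : dist2 (fmapL neg j n p) (fmapL neg j n q) = dist2 p q.
Proof.
rewrite -(LK p) -(LK q) !fmapL_L; case: neg; rewrite !dist2L; congr Num.sqrt; rewrite /Q; ring.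
Qed.

Definition finvj (neg : bool) (j : int) : int := if neg then j else - j.

Lemma fmapK neg j n : cancel (fmapL neg j n) (fmapL neg (finvj neg j) (finvj neg n)).
Proof.
move=> p; rewrite -(LK p); case: neg; rewrite /finvj !fmapL_L; congr L; pc; lra.
Qed.

Lemma fmapKV neg j n : cancel (fmapL neg (finvj neg j) (finvj neg n)) (fmapL neg j n).
Proof.
move=> p; rewrite -(LK p); case: neg; rewrite /finvj !fmapL_L; congr L; pc; lra.
Qed.

Definition rep (z : Kpt) : pt := projT1 (cid (proj_surj z)).
Lemma repK z : proj (rep z) = z.
Proof. by rewrite /rep; case: cid => p /= ->. Qed.

Definition gm neg j n (z : Kpt) : Kpt := proj (fmapL neg j n (rep z)).

Lemma gm_proj neg j n p : gm neg j n (proj p) = proj (fmapL neg j n p).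
Proof. by rewrite /gm; apply/projP; apply: fmap_K; apply/projP; rewrite repK. Qed.

Lemma gm_bij neg j n : bijective (gm neg j n).
Proof.
exists (gm neg (finvj neg j) (finvj neg n)) => z; have [p ->] := proj_surj z;
by rewrite !gm_proj ?fmapK ?fmapKV.
Qed.

Lemma gm_dist neg j n z w : distK (gm neg j n z) (gm neg j n w) = distK z w.
Proof.
have [p ->] := proj_surj z; have [q ->] := proj_surj w; rewrite !gm_proj /distK /=.
congr inf; apply/seteqP; split => d [p' [q' [/= hp [hq ->]]]].
- exists (fmapL neg (finvj neg j) (finvj neg n) p'), (fmapL neg (finvj neg j) (finvj neg n) q').
  split; first by rewrite -{1}(fmapK neg j n p); apply: fmap_K.
  split; first by rewrite -{1}(fmapK neg j n q); apply: fmap_K.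
  by rewrite fmap_dist.
- exists (fmapL neg j n p'), (fmapL neg j n q'); split; first exact: fmap_K.
  by split; [exact: fmap_K | rewrite fmap_dist].
Qed.

Lemma img_fmap neg j n (D : set pt) :
  fmapL neg j n @` D = [set p | D (fmapL neg (finvj neg j) (finvj neg n) p)].
Proof.
apply/seteqP; split => p.
- by case=> q hq <-; rewrite /= fmapK.
- by move=> /= h; exists (fmapL neg (finvj neg j) (finvj neg n) p) => //; rewrite fmapKV.
Qed.

Lemma fmap_up neg j n a b : fmapL neg j n @` up_tri a b =
  if neg then down_tri (j - a - 1) (n - b - 1) else up_tri (a + j) (b + n).
Proof.
rewrite img_fmap; apply/seteqP; case: neg; split => p /=; rewrite -(LK p) /finvj ?luL ?lvL
  ?upP ?downtP /mem_up /mem_down; pc; move=> [h1 [h2 h3]]; do 2! (split; first lra); lra.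
Qed.

Lemma fmap_down neg j n a b : fmapL neg j n @` down_tri a b =
  if neg then up_tri (j - a - 1) (n - b - 1) else down_tri (a + j) (b + n).
Proof.
rewrite img_fmap; apply/seteqP; case: neg; split => p /=; rewrite -(LK p) /finvj ?luL ?lvL
  ?upP ?downtP /mem_up /mem_down; pc; move=> [h1 [h2 h3]]; do 2! (split; first lra); lra.
Qed.

Lemma gm_img neg j n (D : set pt) : gm neg j n @` ((@proj R) @` D) = (@proj R) @` (fmapL neg j n @` D).
Proof.
apply/seteqP; split => z.
- by case=> _ [p hp <-] <-; rewrite gm_proj; exists (fmapL neg j n p) => //; exists p.
- by case=> _ [p hp <-] <-; exists (proj p); [exists p | rewrite gm_proj].
Qed.

Lemma gm_tess neg j n : tess_isometry (gm neg j n).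
Proof.
split; first by split; [exact: gm_bij | exact: gm_dist].
move=> Y [D [[a [b [->|->]]] ->]]; rewrite gm_img ?fmap_up ?fmap_down.
- exists (if neg then down_tri (j - a - 1) (n - b - 1) else up_tri (a + j) (b + n)); split => //.
  by case: neg; [exists (j - a - 1), (n - b - 1); right | exists (a + j), (b + n); left].
- exists (if neg then up_tri (j - a - 1) (n - b - 1) else down_tri (a + j) (b + n)); split => //.
  by case: neg; [exists (j - a - 1), (n - b - 1); left | exists (a + j), (b + n); right].
Qed.

End E.

Definition wn (w : 'S_3) (k : nat) : nat := w (inord k).
Definition eps (b : bool) : int := if b then -1 else 1.

Lemma wn_lt w k : (wn w k < 3)%N.
Proof. exact: ltn_ord. Qed.

Lemma wn_inj w k k' : (k < 3)%N -> (k' < 3)%N -> wn w k = wn w k' -> k = k'.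
Proof.
move=> hk hk' /val_inj /perm_inj /(congr1 (@nat_of_ord 3)); by rewrite !inordK.
Qed.

Lemma wn_mul (w1 w2 : 'S_3) k : (k < 3)%N -> wn (w2 * w1)%g k = wn w1 (wn w2 k).
Proof. by move=> hk; rewrite /wn permM inord_val. Qed.

Lemma eps_def (x0 x1 : nat) : (x0 < 3)%N -> (x1 < 3)%N -> x0 <> x1 ->
  (3 %| x1%:Z - x0%:Z - eps (negf x0 x1))%Z.
Proof.
move=> h0 h1 hne; rewrite /eps /negf; case: eqP => E /=.
- apply/dvdzP; exists ((x1%:Z - x0%:Z - 1) %/ 3)%Z; subst x1; lia.
- apply/dvdzP; exists ((x1%:Z - x0%:Z + 1) %/ 3)%Z; lia.
Qed.

Lemma affine (w : 'S_3) k : (k < 3)%N ->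
  (3 %| (wn w k)%:Z - eps (negf (wn w 0) (wn w 1)) * k%:Z - (wn w 0)%:Z)%Z.
Proof.
move=> hk.
have h0 := wn_lt w 0; have h1 := wn_lt w 1; have h2 := wn_lt w 2.
have d01 : wn w 0 <> wn w 1 by move/(wn_inj (erefl : (0 < 3)%N) (erefl : (1 < 3)%N)).
have d02 : wn w 0 <> wn w 2 by move/(wn_inj (erefl : (0 < 3)%N) (erefl : (2 < 3)%N)).
have d12 : wn w 1 <> wn w 2 by move/(wn_inj (erefl : (1 < 3)%N) (erefl : (2 < 3)%N)).
have E := eps_def h0 h1 d01.
move: E; case: (negf _ _) => /= /dvdzP [r hr]; apply/dvdzP;
case: k hk => [|[|[|//]]] _.
- by exists 0; lia.
- by exists r; lia.
- by exists (2 - (wn w 0)%:Z - r); lia.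
- by exists 0; lia.
- by exists r; lia.
- by exists (- (wn w 0)%:Z - r); lia.
Qed.

Section F.
Variable R : realType.
Local Notation pt := (pt R).
Implicit Types p q r : pt.
Local Notation X := (@X R).
Local Notation V := (@V R).
Local Notation P6 := (@P6 R).
Local Notation Kpt := (Kpt R).
Local Notation gm := (@gm R).

Lemma latV (m n : int) k : (k < 3)%N -> (3 %| m - n - k%:Z)%Z -> proj (L m%:~R n%:~R) = V k.
Proof.
move=> hk /dvdzP [r hr]; rewrite LP6 /V; apply/ktP; rewrite /kt.
have [t [ht|ht]] : exists t, n = 2 * t \/ n = 2 * t + 1 by exists (n %/ 2)%Z; lia.
- apply/orP; left; apply/andP; split; apply/dvdzP.
  + by exists (- t); lia.
  + by exists (- t - r); lia.
- apply/orP; right; apply/andP; split; apply/dvdzP.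
  + by exists t; lia.
  + by exists (- t - r - 1); lia.
Qed.

Lemma VL k : (k < 3)%N -> V k = proj (L (k%:Z)%:~R (0 : int)%:~R).
Proof. by move=> hk; rewrite (latV hk) //; apply/dvdzP; exists 0; lia. Qed.

Definition phiN (a : nat) (w : 'S_3) : Kpt -> Kpt :=
  gm (negf (wn w 0) (wn w 1)) ((wn w 0)%:Z + a%:Z) a%:Z.
Definition phi (g : 'Z_2 * 'S_3) : Kpt -> Kpt := phiN g.1 (g.2)^-1%g.

Lemma phiN_tess a w : tess_isometry (phiN a w).
Proof. exact: gm_tess. Qed.

Lemma phiN_V a w k : (k < 3)%N -> phiN a w (V k) = V (wn w k).
Proof.
move=> hk; have hA := affine w hk.
rewrite (VL hk) /phiN gm_proj fmapL_L.
move: hA; rewrite /eps; case: (negf _ _) => hA.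
- rewrite (_ : L _ _ = L ((wn w 0)%:Z + a%:Z - k%:Z)%:~R (a%:Z)%:~R); last first.
    by congr L; [rewrite intrB intrD; lra | rewrite mulr0z; lra].
  apply: latV; first exact: wn_lt.
  case/dvdzP: hA => r hr; apply/dvdzP; exists (- r); lia.
- rewrite (_ : L _ _ = L (k%:Z + (wn w 0)%:Z + a%:Z)%:~R (a%:Z)%:~R); last first.
    by congr L; [rewrite 3!intrD; lra | rewrite mulr0z; lra].
  apply: latV; first exact: wn_lt.
  case/dvdzP: hA => r hr; apply/dvdzP; exists (- r); lia.
Qed.

Lemma phiN_X0 a w : phiN a w @` X 0 = X (Tt (negf (wn w 0) (wn w 1)) (wn w 0) a).
Proof.
rewrite /X /phiN gm_img fmap_up /Tt; case: (negf _ _).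
- by rewrite down_tidx (_ : ta 0 = 0) // (_ : tb 0 = 0) // ?subr0.
- by rewrite up_tidx (_ : ta 0 = 0) // (_ : tb 0 = 0) // ?add0r.
Qed.

Lemma gm_comp n1 j1 m1 n2 j2 m2 (z : Kpt) :
  gm n1 j1 m1 (gm n2 j2 m2 z) = gm (n1 (+) n2) (j1 + eps n1 * j2) (m1 + eps n1 * m2) z.
Proof.
have [p ->] := proj_surj z; rewrite !gm_proj; congr proj.
rewrite -(LK p) /eps; case: n1; case: n2; rewrite /fmapL /= ?luL ?lvL; congr L; pc; lra.
Qed.

Lemma gm_equiv neg (j m j' m' : int) :
  (exists t r : int, m' - m = 2 * t /\ j' - j + t = 3 * r) -> gm neg j m = gm neg j' m'.
Proof.
move=> [t [r [h1 h2]]]; apply: funext => z; have [p ->] := proj_surj z; rewrite !gm_proj.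
apply/projP; have -> : fmapL neg j' m' p = nf false t r (fmapL neg j m p); last exact: Kequiv_nf.
have e1 : (m'%:~R : R) = m%:~R + 2 * t%:~R.
  by have := congr1 (fun x : int => (x%:~R : R)) h1; pc => ?; lra.
have e2 : (j'%:~R : R) = j%:~R - t%:~R + 3 * r%:~R.
  by have := congr1 (fun x : int => (x%:~R : R)) h2; pc => ?; lra.
rewrite -(LK p); case: neg; rewrite !fmapL_L nfLf; congr L; lra.
Qed.

End F.

Section G.
Variable R : realType.
Local Notation pt := (pt R).
Local Notation X := (@X R).
Local Notation V := (@V R).
Local Notation Kpt := (Kpt R).
Local Notation gm := (@gm R).
Local Notation phi := (@phi R).
Local Notation phiN := (@phiN R).

Lemma gm_equiv' neg (j m j' m' : int) (z : Kpt) :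
  (exists t r : int, m' - m = 2 * t /\ j' - j + t = 3 * r) -> gm neg j m z = gm neg j' m' z.
Proof. by move=> H; rewrite (@gm_equiv R neg _ _ _ _ H). Qed.

Lemma phi_hom (a b : 'Z_2 * 'S_3) :
  phi ((a.1 + b.1)%R, (a.2 * b.2)%g) = (phi a \o phi b)%FUN.
Proof.
rewrite /phi /= invgM; set wa := (a.2)^-1%g; set wb := (b.2)^-1%g.
have hAB : ((a.1 + b.1)%R : nat) = (((a.1 : nat) + b.1) %% 2)%N by [].
have hA : (a.1 < 2)%N by case: (a.1).
have hB : (b.1 < 2)%N by case: (b.1).
rewrite /phiN !wn_mul //.
set AB := (_ %% _)%N.
have hAB' : AB = (((a.1 : nat) + b.1) %% 2)%N by [].
clear hAB.
have ea0 := affine wa (wn_lt wb 0); have ea1 := affine wa (wn_lt wb 1).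
have eb := affine wb (erefl : (1 < 3)%N).
have hx : wn wa (wn wb 0) <> wn wa (wn wb 1).
  by move/(wn_inj (wn_lt _ _) (wn_lt _ _))/(wn_inj (erefl : (0 < 3)%N) (erefl : (1 < 3)%N)).
have ed := eps_def (wn_lt _ _) (wn_lt _ _) hx.
move: ea0 ea1 eb ed.
set x0 := wn wa (wn wb 0); set x1 := wn wa (wn wb 1).
set na := negf (wn wa 0) (wn wa 1); set nb := negf (wn wb 0) (wn wb 1).
move=> ea0 ea1 eb ed.
have Hn : negf x0 x1 = na (+) nb.
  move: ea0 ea1 eb ed; rewrite /eps.
  case: na; case: nb; case: (negf x0 x1) => //= /dvdzP [r1 h1] /dvdzP [r2 h2] /dvdzP [r3 h3] /dvdzP [r4 h4];
  exfalso; lia.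
apply: funext => z /=; rewrite gm_comp Hn; apply: gm_equiv'.
case/dvdzP: ea0 => r0 h0.
clear ea1 eb ed Hn.
move: h0; rewrite /eps /na; case: (negf _ _) => /= h0.
- exists (((a.1 : nat)%:Z - (b.1 : nat)%:Z - AB%:Z) %/ 2)%Z.
  exists ((((a.1 : nat)%:Z - (b.1 : nat)%:Z - AB%:Z) %/ 2)%Z - r0).
  split; lia.
- exists (((a.1 : nat)%:Z + (b.1 : nat)%:Z - AB%:Z) %/ 2)%Z.
  exists ((((a.1 : nat)%:Z + (b.1 : nat)%:Z - AB%:Z) %/ 2)%Z - r0).
  split; lia.
Qed.

Lemma perm_of_fun (f : nat -> nat) : (forall k, (k < 3)%N -> (f k < 3)%N) ->
  (forall k k', (k < 3)%N -> (k' < 3)%N -> f k = f k' -> k = k') ->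
  exists w : 'S_3, forall k, (k < 3)%N -> wn w k = f k.
Proof.
move=> hf hinj.
have inj : injective (fun x : 'I_3 => (inord (f x) : 'I_3)).
  move=> x y /(congr1 (@nat_of_ord 3)); rewrite !inordK ?hf // => /hinj h.
  by apply: val_inj; apply: h.
by exists (perm inj) => k hk; rewrite /wn permE /= !inordK ?hf.
Qed.

Lemma phi_inj : injective phi.
Proof.
move=> [a s] [b t] E.
have Hw : forall k, (k < 3)%N -> wn s^-1 k = wn t^-1 k.
  move=> k hk; apply: (VDistinct (R := R)); try exact: wn_lt.
  by have := congr1 (fun f => f (V k)) E; rewrite /phi /= !phiN_V.
have Est : s = t.
  apply: invg_inj; apply/permP => x; apply: val_inj.
  by have := Hw x (ltn_ord x); rewrite /wn inord_val.
subst t; congr pair.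
have := congr1 (fun f => f @` X 0) E; rewrite /= /phi /= !phiN_X0.
set w := s^-1%g.
have h0 := wn_lt w 0; have h1 := wn_lt w 1.
have /allP H0 := C_T; have /allP H1 := H0 _ (inI3 h0); have /andP [/andP [ha hb] hne] := H1 _ (inI3 h1).
have ha' : (a < 2)%N := ltn_ord a. have hb' : (b < 2)%N := ltn_ord b.
move=> /(XDistinct _ _) E'.
apply: val_inj => /=.
move: E' hne; case: (nat_of_ord a) ha' => [|[|//]] _; case: (nat_of_ord b) hb' => [|[|//]] _ //.
- by move=> E'; rewrite E' ?eqxx //; move: hb ha; case: (Tt _ _ 1).
- by move=> E'; rewrite E' ?eqxx //; move: hb ha; case: (Tt _ _ 1).
Qed.

End G.

Theorem proposition4p7 (R : realType) :
  exists phi : 'Z_2 * 'S_3 -> (Kpt R -> Kpt R),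
    injective phi /\
    (forall F : Kpt R -> Kpt R, tess_isometry F <-> exists g, F = phi g) /\
    (forall a b : 'Z_2 * 'S_3,
        phi ((a.1 + b.1)%R, (a.2 * b.2)%g) = (phi a \o phi b)%FUN).
Proof.
exists (@phi R); split; first exact: phi_inj.
split; last exact: phi_hom.
move=> F; split; last by case=> g ->; exact: phiN_tess.
move=> HF.
have [sg Hsg] := sigma_ex HF.
have [pi Hpi] := pi_ex HF Hsg.
have Hc := constr HF Hsg Hpi.
have [w Hw] := perm_of_fun (pi_lt Hpi) (pi_inj HF Hpi).
have HT := @sg0_T _ _ (sg_lt Hsg) (pi_lt Hpi) (pi_inj HF Hpi) Hc.
have Hpi' : forall a, forall k, (k < 3)%N -> (pi k < 3)%N /\ phiN a w (V R k) = V R (pi k).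
  by move=> a k hk; split; [exact: (pi_lt Hpi hk) | rewrite phiN_V // Hw].
suff [a Ha] : exists a : 'Z_2, F = phiN a w.
  by exists (a, w^-1%g); rewrite /phi /= invgK.
have key : forall a : 'Z_2, sg 0 = Tt (negf (pi 0) (pi 1)) (pi 0) a -> F = phiN a w.
  move=> a Ea.
  have T2 := phiN_tess R a w.
  have [sg' Hsg'] := sigma_ex T2.
  have Hc' := constr T2 Hsg' (Hpi' a).
  have E0 : sg' 0 = sg 0.
    have := phiN_X0 R a w; rewrite (sg_X Hsg') // !Hw // -Ea => E.
    apply: XDistinct E; [exact: (sg_lt Hsg') | exact: (sg_lt Hsg)].
  have Esg : forall i, (i < 6)%N -> sg' i = sg i.
    by move=> i hi; rewrite (@sg_build _ _ Hc _ hi) (@sg_build _ _ Hc' _ hi) E0.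
  apply: (U2 HF T2 Hsg _ Hpi (Hpi' a)).
  by move=> i hi; rewrite -Esg //; apply: Hsg'.
case: HT => HT.
- by exists 0%R; apply: key.
- by exists 1%R; apply: key.
Qed.
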